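(* For every $d\ge2$ there exist constants $a_d,A_d>0$ and an integer $T'_d\ge1$, depending only on $d$, such that for every $\delta>0$ and every $T\ge T'_d$, \[ \delta\bigl(1+a_d\,T^{-2/(d-1)}\bigr)\;\le\;\mathrm{OPT}^{\mathrm{improper}}_d(T,\delta)\;\le\;\delta\bigl(1+A_d\,T^{-2/(d-1)}\bigr). \]
   Context: Improper linear reconstruction game: fix $d\ge1$, $T\ge0$, $\delta>0$. An adversary holds a secret $x^*\in\mathbb{R}^d$; in each round $t=1,\dots,T$ the reconstructor (possibly adaptively) chooses $v_t\in S^{d-1}$ and receives $r_t\in\mathbb{R}$ with $|r_t-\langle x^*,v_t\rangle|\le\delta$. After $T$ rounds the reconstructor outputs a function $\hat G_T:S^{d-1}\to\mathbb{R}$. All strategies are deterministic. $\mathrm{OPT}^{\mathrm{improper}}_d(T,\delta)=\inf_{\mathcal R}\sup_{x^*}\sup_{\mathcal A}\sup_{v\in S^{d-1}}|\hat G_T(v)-\langle x^*,v\rangle|$, the infimum over improper reconstructor strategies and the suprema over secrets and adversary answer strategies consistent with the secret. *)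

(* Defs.v *)
From HB Require Import structures.
From mathcomp Require Import all_boot all_order all_algebra.
From mathcomp Require Import all_classical all_reals.
From mathcomp Require Import ereal exp.
Set Implicit Arguments. Unset Strict Implicit. Unset Printing Implicit Defensive.
Import Order.TTheory GRing.Theory Num.Theory.
Local Open Scope ring_scope.
Local Open Scope classical_set_scope.

Section Game.
Variables (R : realType) (d : nat).

Definition dotv (u v : 'rV[R]_d) : R := \sum_(i < d) u 0 i * v 0 i.

Definition sphere := {v : 'rV[R]_d | dotv v v = 1}.

(* A deterministic, adaptive, improper reconstructor strategy.
   [rq s] is the query asked after having received the answers [s]
   (earlier queries are determined by earlier answers, since the strategy is
   deterministic); [rout s] is the output function G_T after the answers [s]. *)
Record reconstructor := Reconstructor {
  rq : seq R -> sphere;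
  rout : seq R -> sphere -> R }.

(* The answer sequence [rs] (of length T) is consistent with the secret [x]
   against strategy [S]: in round t+1 the query is v = rq S (take t rs) and
   the answer r satisfies |r - <x, v>| <= delta. Every adaptive deterministic
   adversary strategy produces such a sequence, and every such sequence is
   produced by some adversary strategy. *)
Definition consistent (S : reconstructor) (T : nat) (delta : R)
    (x : 'rV[R]_d) (rs : seq R) : Prop :=
  size rs = T /\
  forall t, (t < T)%N ->
    `| nth 0 rs t - dotv x (proj1_sig (rq S (take t rs))) | <= delta.

Definition worst_error (S : reconstructor) (T : nat) (delta : R) : \bar R :=
  ereal_sup [set e : \bar R | exists (x : 'rV[R]_d) (rs : seq R) (v : sphere),
      consistent S T delta x rs /\
      e = (`| rout S rs v - dotv x (proj1_sig v) |)%:E].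

Definition OPT_improper (T : nat) (delta : R) : \bar R :=
  ereal_inf [set worst_error S T delta | S in [set: reconstructor]].

End Game.

(* Main.v *)
Require Import Defs.
From HB Require Import structures.
From mathcomp Require Import all_boot all_order all_algebra.
From mathcomp Require Import all_classical all_reals.
From mathcomp Require Import ereal exp.
From mathcomp Require Import ring lra zify.
Import Order.TTheory GRing.Theory Num.Theory.
Local Open Scope ring_scope.
Set Implicit Arguments. Unset Strict Implicit. Unset Printing Implicit Defensive.

Section Dot.
Variables (R : realType) (d : nat).
Implicit Types u v w : 'rV[R]_d.

Lemma dotvC u v : dotv u v = dotv v u.
Proof. by apply: eq_bigr => i _; rewrite mulrC. Qed.
Lemma dotvDl u w v : dotv (u + w) v = dotv u v + dotv w v.
Proof. rewrite /dotv -big_split; apply: eq_bigr => i _; by rewrite !mxE mulrDl. Qed.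
Lemma dotvZl k u v : dotv (k *: u) v = k * dotv u v.
Proof. rewrite /dotv mulr_sumr; apply: eq_bigr => i _; by rewrite !mxE mulrA. Qed.
Lemma dotvNl u v : dotv (- u) v = - dotv u v.
Proof. by rewrite -scaleN1r dotvZl mulN1r. Qed.
Lemma dotvBl u w v : dotv (u - w) v = dotv u v - dotv w v.
Proof. by rewrite dotvDl dotvNl. Qed.
Lemma dotvDr u w v : dotv v (u + w) = dotv v u + dotv v w.
Proof. by rewrite dotvC dotvDl !(dotvC v). Qed.
Lemma dotvZr k u v : dotv v (k *: u) = k * dotv v u.
Proof. by rewrite dotvC dotvZl (dotvC v). Qed.
Lemma dotvBr u w v : dotv v (u - w) = dotv v u - dotv v w.
Proof. by rewrite dotvC dotvBl !(dotvC v). Qed.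
Lemma dotvNr u v : dotv v (- u) = - dotv v u.
Proof. by rewrite dotvC dotvNl dotvC. Qed.
Lemma dotv_ge0 u : 0 <= dotv u u.
Proof. apply: sumr_ge0 => i _; by rewrite -expr2 sqr_ge0. Qed.

Lemma dotv_exp u v t :
  dotv (u - t *: v) (u - t *: v) = dotv u u - 2 * t * dotv u v + t ^+ 2 * dotv v v.
Proof.
rewrite dotvBl !dotvBr !dotvZl !dotvZr (dotvC v u); ring.
Qed.

Lemma dotv_amgm u v t : 2 * t * dotv u v <= dotv u u + t ^+ 2 * dotv v v.
Proof. have := dotv_ge0 (u - t *: v); rewrite dotv_exp; lra. Qed.

Lemma CS_unit a v : dotv v v = 1 -> dotv a v ^+ 2 <= dotv a a.
Proof.
move=> hv; have := dotv_amgm a v (dotv a v); rewrite hv; nra.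
Qed.

Definition nrm w := (Num.sqrt (dotv w w))^-1 *: w.

Lemma dotv_nrm w : 0 < dotv w w -> dotv (nrm w) (nrm w) = 1.
Proof.
move=> hw; rewrite /nrm dotvZl dotvZr.
have hs := sqr_sqrtr (ltW hw).
have s0 : Num.sqrt (dotv w w) != 0 by rewrite sqrtr_eq0 -ltNge.
rewrite -{3}hs; field. done.
Qed.

Lemma dotv_nrm_sq w z : 0 < dotv w w -> dotv z (nrm w) ^+ 2 = dotv z w ^+ 2 / dotv w w.
Proof.
move=> hw; rewrite /nrm dotvZr.
have hs := sqr_sqrtr (ltW hw).
have s0 : Num.sqrt (dotv w w) != 0 by rewrite sqrtr_eq0 -ltNge.
rewrite -{2}hs; field. done.
Qed.

Definition sph w (hw : 0 < dotv w w) : sphere R d := exist _ (nrm w) (dotv_nrm hw).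

End Dot.
Unset Implicit Arguments.
Section Round.
Variable R : realType.
Lemma round_exists (N : nat) (y : R) : 0 <= y <= N%:R ->
  exists k : 'I_N.+1, `|(k : nat)%:R - y| <= 1/2.
Proof.
elim: N y => [|N IH] y /andP[y0 yN].
  exists ord0 => /=; have -> : y = 0 by apply/eqP; rewrite eq_le yN y0.
  rewrite subrr normr0; lra.
case: (lerP y N%:R) => hyN.
  have [k hk] := IH y (introT andP (conj y0 hyN)).
  exists (inord k); rewrite inordK //; exact: (ltn_trans (ltn_ord k)).
case: (lerP y (N%:R + 1/2)) => hy2.
  exists (inord N); rewrite inordK //; rewrite ler_norml; apply/andP; split; lra.
exists (inord N.+1); rewrite inordK // ler_norml -natr1 in yN *; apply/andP; split; lra.
Qed.
End Round.

Notation JC n m := ('I_n.+1 * {ffun 'I_n -> 'I_(2 * m).+1})%type.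
Section Cover.
Variables (R : realType) (n m : nat).
Definition wv (j : JC n m) : 'rV[R]_n.+1 :=
  \row_k (match unlift j.1 k with None => m%:R | Some k' => ((j.2 k' : nat)%:R - m%:R) end).

Lemma sum_ge_term (F : 'I_n.+1 -> R) i : (forall k, 0 <= F k) -> F i <= \sum_k F k.
Proof.
move=> h; rewrite (bigD1 i) //=; have : 0 <= \sum_(k | k != i) F k by apply: sumr_ge0.
lra.
Qed.

Lemma wv_pos j : (0 < m)%N -> 0 < dotv (wv j) (wv j).
Proof.
move=> m0; rewrite /dotv; apply: (lt_le_trans _ (sum_ge_term (fun k => wv j 0 k * wv j 0 k) j.1 _)).
  by rewrite !mxE unlift_none -expr2 exprn_gt0 // ltr0n.
by move=> k; rewrite -expr2 sqr_ge0.
Qed.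

Lemma cover_core (z : 'rV[R]_n.+1) i : 0 < z 0 i -> (forall k, `|z 0 k| <= z 0 i) ->
  (1 <= m)%N -> 2 * n.+1%:R <= m%:R ^+ 2 :> R ->
  (forall j, dotv z (wv j) ^+ 2 <= dotv (wv j) (wv j)) ->
  dotv z z <= 1 + n.+1%:R / m%:R ^+ 2.
Proof.
move=> zi0 hmax m1 hm2 hcov.
set M := z 0 i. set lam := m%:R / M.
have m0 : 0 < m%:R :> R by rewrite ltr0n.
have lam0 : 0 < lam by rewrite divr_gt0.
have lamM : lam * M = m%:R by rewrite /lam mulrVK ?unitfE ?gt_eqF.
have hr : forall k', exists g : 'I_(2 * m).+1,
    `|(g : nat)%:R - m%:R - lam * z 0 (lift i k')| <= 1/2.
  move=> k'.
  have hz := hmax (lift i k'); rewrite ler_norml in hz; case/andP: hz => hz1 hz2.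
  have a1 : lam * z 0 (lift i k') <= m%:R by rewrite -lamM ler_pM2l.
  have a2 : - m%:R <= lam * z 0 (lift i k') by rewrite -lamM -mulrN ler_pM2l.
  have b : 0 <= lam * z 0 (lift i k') + m%:R <= (2 * m)%:R.
    by rewrite natrM; apply/andP; split; lra.
  have [g hg] := @round_exists R (2 * m) _ b.
  exists g; suff -> : (g : nat)%:R - m%:R - lam * z 0 (lift i k') =
     (g : nat)%:R - (lam * z 0 (lift i k') + m%:R) :> R by [].
  ring.
have [g hg] := fin_all_exists hr.
pose j : JC n m := (i, [ffun k' => g k']).
pose e := wv j - lam *: z.
have he : forall k, `|e 0 k| <= 1/2.
  move=> k; rewrite /e !mxE /=; case: unliftP => [k' ->|->].
    by rewrite ffunE.
  by rewrite -/M lamM subrr normr0; lra.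
have hw : wv j = lam *: z + e by rewrite /e addrC subrK.
clearbody e.
set p := dotv z e. set q := dotv e e. set r2 := dotv z z.
have h1 : dotv z (wv j) = lam * r2 + p by rewrite hw dotvDr dotvZr.
have h2 : dotv (wv j) (wv j) = lam ^+ 2 * r2 + 2 * lam * p + q.
  rewrite hw dotvDl !dotvDr !dotvZl !dotvZr (dotvC e z) -/p -/q -/r2; ring.
have hq : q <= n.+1%:R / 4.
  have : q <= \sum_(k < n.+1) (1/4 : R).
    apply: ler_sum => k _; have := he k; rewrite ler_norml => /andP[]; nra.
  by rewrite sumr_const card_ord -mulr_natr; lra.
have q0 : 0 <= q by apply: dotv_ge0.
have hp : - lam ^+ 2 * r2 / 2 - 2 * q <= 2 * lam * p.
  have := dotv_ge0 (lam / 2 *: z + e).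
  rewrite dotvDl !dotvDr !dotvZl !dotvZr (dotvC e z) -/p -/q -/r2; nra.
have hM : m%:R ^+ 2 <= lam ^+ 2 * r2.
  have : M ^+ 2 <= r2.
    rewrite /r2 /dotv expr2; apply: (sum_ge_term (fun k => z 0 k * z 0 k)).
    by move=> k; rewrite -expr2 sqr_ge0.
  by rewrite -lamM exprMn; move=> h; rewrite ler_pM2l // exprn_gt0.
have H := hcov j; rewrite h1 h2 in H.
have hX : m%:R ^+ 2 / 4 <= lam ^+ 2 * r2 + 2 * lam * p by lra.
have hE : (r2 - 1) * (lam ^+ 2 * r2 + 2 * lam * p) <= q - p ^+ 2 by nra.
have p2 : 0 <= p ^+ 2 by apply: sqr_ge0.
case: (lerP r2 1) => hr2.
  have : 0 <= n.+1%:R / m%:R ^+ 2 :> R by rewrite divr_ge0 // ?exprn_ge0 // ltW.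
  lra.
rewrite -lerBlDl ler_pdivlMr ?exprn_gt0 //.
have : (r2 - 1) * (m%:R ^+ 2 / 4) <= (r2 - 1) * (lam ^+ 2 * r2 + 2 * lam * p).
  by rewrite ler_pM2l ?subr_gt0.
lra.
Qed.

Lemma cover (z : 'rV[R]_n.+1) :
  (1 <= m)%N -> 2 * n.+1%:R <= m%:R ^+ 2 :> R ->
  (forall j, dotv z (wv j) ^+ 2 <= dotv (wv j) (wv j)) ->
  dotv z z <= 1 + n.+1%:R / m%:R ^+ 2.
Proof.
move=> m1 hm2 hcov.
have m0 : 0 < m%:R :> R by rewrite ltr0n.
have pos : 0 <= n.+1%:R / m%:R ^+ 2 :> R by rewrite divr_ge0 // ?exprn_ge0 // ltW.
case: (@arg_maxP _ _ _ ord0 xpredT (fun k => `|z 0 k|) erefl) => i _ hi.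
case: (ltrgtP (z 0 i) 0) => hzi.
- have := @cover_core (- z) i.
  rewrite !mxE dotvNl dotvNr opprK; apply => //.
  + by rewrite oppr_gt0.
  + by move=> k; rewrite mxE normrN -(ltr0_norm hzi); apply: hi.
  + by move=> j; rewrite dotvNl sqrrN.
- have hmx : forall k, `|z 0 k| <= z 0 i by move=> k; rewrite -(gtr0_norm hzi); exact: hi.
  exact: (cover_core z i hzi hmx m1 hm2 hcov).
- have : dotv z z = 0.
    apply: big1 => k _; have h : `|z 0 k| <= `|z 0 i| := hi k isT.
    move: h; rewrite hzi normr0 normr_le0 => /eqP ->.
    by rewrite mulr0.
  move=> ->; lra.
Qed.
End Cover.
Notation JP n m := {ffun 'I_n -> 'I_m}.
Section Pack.
Variables (R : realType) (n m : nat).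
Definition pv (f : JP n m) : 'rV[R]_n.+1 :=
  \row_k (match unlift ord0 k with None => m%:R | Some k' => (f k' : nat)%:R end).

Lemma pv_pos f : (0 < m)%N -> 0 < dotv (pv f) (pv f).
Proof.
move=> m0; rewrite /dotv; apply: (lt_le_trans _ (@sum_ge_term R n (fun k => pv f 0 k * pv f 0 k) ord0 _)).
  by rewrite !mxE unlift_none -expr2 exprn_gt0 // ltr0n.
by move=> k; rewrite -expr2 sqr_ge0.
Qed.

Lemma pv_le f : dotv (pv f) (pv f) <= n.+1%:R * m%:R ^+ 2.
Proof.
have : dotv (pv f) (pv f) <= \sum_(k < n.+1) m%:R ^+ 2.
  apply: ler_sum => k _; rewrite !mxE -expr2; case: (unlift ord0 k) => [k'|//].
  rewrite lerXn2r ?nnegrE ?ler0n // ler_nat; exact: ltnW.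
by rewrite sumr_const card_ord mulr_natl.
Qed.

Lemma sep_real (a b t mm : R) : 0 <= b <= mm -> (a + 1 <= b \/ b + 1 <= a) ->
  1/4 <= (mm - t * mm) ^+ 2 + (a - t * b) ^+ 2.
Proof.
move=> /andP[b0 bm] hab.
set s := 1 - t.
have e1 : mm - t * mm = s * mm by rewrite /s; ring.
have e2 : a - t * b = (a - b) + s * b by rewrite /s; ring.
rewrite e1 e2.
case: (lerP (1/4) ((s * mm) ^+ 2)) => h.
  have : 0 <= ((a - b) + s * b) ^+ 2 by apply: sqr_ge0. lra.
have hsb : (s * b) ^+ 2 <= (s * mm) ^+ 2.
  rewrite !exprMn; apply: ler_wpM2l; first exact: sqr_ge0.
  by rewrite lerXn2r ?nnegrE //; apply: le_trans bm.
have h2 : (s * b) ^+ 2 < 1/4 by lra.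
have h3 : - (1/2) < s * b < 1/2.
  apply/andP; split; nra.
case/andP: h3 => h3 h4.
have : 0 <= (s * mm) ^+ 2 by apply: sqr_ge0.
case: hab => hab; nra.
Qed.

Lemma pv_sep f1 f2 t : f1 != f2 ->
  1/4 <= dotv (pv f1 - t *: pv f2) (pv f1 - t *: pv f2).
Proof.
move=> hne.
case: (pickP (fun k' => f1 k' != f2 k')) => [k' hk | h]; last first.
  by case/negP: hne; apply/eqP/ffunP => k'; have := h k'; move/negbFE/eqP.
rewrite /dotv (bigD1 ord0) //= (bigD1 (lift ord0 k')) //=.
set rest := \sum_(i | _) _.
have r0 : 0 <= rest by apply: sumr_ge0 => i _; rewrite -expr2 sqr_ge0.
rewrite !mxE unlift_none liftK -!expr2.
have := @sep_real (f1 k' : nat)%:R (f2 k' : nat)%:R t m%:R.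
have hb : 0 <= ((f2 k' : nat)%:R : R) <= m%:R.
  by rewrite ler0n ler_nat ltnW.
have hab : ((f1 k' : nat)%:R + 1 <= (f2 k' : nat)%:R :> R) \/
           ((f2 k' : nat)%:R + 1 <= (f1 k' : nat)%:R :> R).
  case: (ltngtP (f1 k') (f2 k')) => h.
  - by left; rewrite natr1 ler_nat.
  - by right; rewrite natr1 ler_nat.
  - by move/eqP: hk; case; apply: val_inj.
move=> /(_ hb hab); lra.
Qed.

Lemma gap f1 f2 : (0 < m)%N -> f1 != f2 ->
  dotv (pv f1) (pv f2) ^+ 2 <=
  dotv (pv f1) (pv f1) * dotv (pv f2) (pv f2) * (1 - 1 / (4 * n.+1%:R * m%:R ^+ 2)).
Proof.
move=> m0 hne.
have hmR : (m%:R : R) != 0 by rewrite pnatr_eq0 -lt0n.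
have hnR : (1 + n%:R : R) != 0 by rewrite addrC natr1 pnatr_eq0.
set A := dotv (pv f1) (pv f1). set B := dotv (pv f2) (pv f2). set C := dotv (pv f1) (pv f2).
have A0 : 0 < A by apply: pv_pos. have B0 : 0 < B by apply: pv_pos.
have hAle : A <= n.+1%:R * m%:R ^+ 2 by apply: pv_le.
have := pv_sep f1 f2 (C / B) hne; rewrite dotv_exp -/A -/B -/C.
have -> : A - 2 * (C / B) * C + (C / B) ^+ 2 * B = A - C ^+ 2 / B.
  by field; rewrite gt_eqF.
move=> h.
have h1 : B / 4 <= A * B - C ^+ 2.
  have : (1/4) * B <= (A - C ^+ 2 / B) * B by rewrite ler_pM2r.
  have -> : (A - C ^+ 2 / B) * B = A * B - C ^+ 2 by field; rewrite gt_eqF.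
  lra.
have D0 : 0 < n.+1%:R * m%:R ^+ 2 :> R by rewrite mulr_gt0 ?exprn_gt0 ?ltr0n.
have h2 : A * B / (4 * n.+1%:R * m%:R ^+ 2) <= B / 4.
  have hAD : A / (n.+1%:R * m%:R ^+ 2) <= 1 by rewrite ler_pdivrMr // mul1r.
  have -> : A * B / (4 * n.+1%:R * m%:R ^+ 2) = B / 4 * (A / (n.+1%:R * m%:R ^+ 2)).
    by field; rewrite hmR hnR.
  apply: ler_piMr => //; lra.
have -> : A * B * (1 - 1 / (4 * n.+1%:R * m%:R ^+ 2)) =
          A * B - A * B / (4 * n.+1%:R * m%:R ^+ 2).
  by field; rewrite hmR hnR.
move: h1 h2; set X := A * B / _; lra.
Qed.

End Pack.
Lemma kill_real (R : realType) (al be ga ep sg : R) :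
  0 < sg <= 1/4 -> ep ^+ 2 = 1 -> 0 <= ep * (al * be) ->
  1 < al ^+ 2 * (1 + sg) ^+ 2 -> 1 < be ^+ 2 * (1 + sg) ^+ 2 ->
  (al + ep * be) ^+ 2 <= 2 + 2 * ep * ga -> ga ^+ 2 <= 1 - 8 * sg -> False.
Proof.
move=> /andP[s0 s1] e2 p0 ha hb hc hg.
set K := (1 + sg) ^+ 2.
rewrite -/K in ha hb.
have K0 : 1 <= K by rewrite /K; nra.
set p := ep * (al * be).
rewrite -/p in p0.
have pp : p ^+ 2 = al ^+ 2 * be ^+ 2 by rewrite /p !exprMn e2 mul1r.
have hpK : 1 < p * K.
  have : 1 < (al ^+ 2 * K) * (be ^+ 2 * K).
    move: ha hb; rewrite -/K; set X := al ^+ 2 * K; set Y := be ^+ 2 * K => ha hb.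
    have : 0 < (X - 1) * (Y - 1) by rewrite mulr_gt0 // subr_gt0.
    lra.
  have -> : (al ^+ 2 * K) * (be ^+ 2 * K) = (p * K) ^+ 2 by rewrite exprMn pp; ring.
  have : 0 <= p * K by apply: mulr_ge0 => //; lra.
  set Z := p * K => Z0 hZ; case: (lerP Z 1) => // hZ1.
  have : Z ^+ 2 <= 1 by rewrite expr2; nra.
  lra.
have hs : (al + ep * be) ^+ 2 = al ^+ 2 + be ^+ 2 + 2 * p.
  have -> : (al + ep * be) ^+ 2 = al ^+ 2 + ep ^+ 2 * be ^+ 2 + 2 * (ep * (al * be)) by ring.
  by rewrite e2 mul1r.
have h4 : 4 < (2 + 2 * ep * ga) * K.
  have : (al + ep * be) ^+ 2 * K <= (2 + 2 * ep * ga) * K.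
    by apply: ler_wpM2r => //; lra.
  rewrite hs; lra.
have hK : 2 - K >= (1 - 4 * sg) * K.
  rewrite /K; nra.
have hq : (1 - 4 * sg) * K < ep * ga * K by nra.
have hq2 : 1 - 4 * sg < ep * ga.
  by rewrite -(ltr_pM2r (lt_le_trans ltr01 K0)).
have : (1 - 4 * sg) ^+ 2 < (ep * ga) ^+ 2.
  by rewrite ltr_pXn2r ?nnegrE //; lra.
rewrite exprMn e2 mul1r; nra.
Qed.

Section Lower.
Variables (R : realType) (n m : nat).

Definition sgm : R := 1 / (32 * n.+1%:R * m%:R ^+ 2).

Lemma gapn f1 f2 : (0 < m)%N -> f1 != f2 ->
  dotv (nrm (@pv R n m f1)) (nrm (pv R n m f2)) ^+ 2 <= 1 - 8 * sgm.
Proof.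
move=> m0 hne.
have A0 := @pv_pos R n m f1 m0. have B0 := @pv_pos R n m f2 m0.
rewrite dotv_nrm_sq // dotvC dotv_nrm_sq // dotvC.
have := gap R n m f1 f2 m0 hne.
set A := dotv (pv R n m f1) (pv R n m f1). set B := dotv (pv R n m f2) (pv R n m f2). set C := dotv (pv R n m f1) (pv R n m f2).
move=> h.
have hmR : (m%:R : R) != 0 by rewrite pnatr_eq0 -lt0n.
have hnR : (1 + n%:R : R) != 0 by rewrite addrC natr1 pnatr_eq0.
have -> : 1 - 8 * sgm = 1 - 1 / (4 * n.+1%:R * m%:R ^+ 2).
  by rewrite /sgm; field; rewrite hmR hnR.
rewrite ler_pdivrMr // ler_pdivrMr //.
rewrite (_ : (1 - _) * B * A = A * B * (1 - 1 / (4 * n.+1%:R * m%:R ^+ 2))) //; ring.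
Qed.

Lemma kill_uniq f1 f2 (v : 'rV[R]_n.+1) : (0 < m)%N -> dotv v v = 1 ->
  1 < dotv (nrm (@pv R n m f1)) v ^+ 2 * (1 + sgm) ^+ 2 ->
  1 < dotv (nrm (@pv R n m f2)) v ^+ 2 * (1 + sgm) ^+ 2 -> f1 = f2.
Proof.
move=> m0 hv h1 h2; case: (eqVneq f1 f2) => // hne; exfalso.
have A0 := @pv_pos R n m f1 m0. have B0 := @pv_pos R n m f2 m0.
set u1 := nrm (pv R n m f1) in h1 *. set u2 := nrm (pv R n m f2) in h2 *.
have hu1 : dotv u1 u1 = 1 by apply: dotv_nrm.
have hu2 : dotv u2 u2 = 1 by apply: dotv_nrm.
have hg := gapn f1 f2 m0 hne; rewrite -/u1 -/u2 in hg.
clearbody u1 u2.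
set al := dotv u1 v in h1 *. set be := dotv u2 v in h2 *. set ga := dotv u1 u2 in hg.
pose ep : R := if 0 <= al * be then 1 else -1.
have e2 : ep ^+ 2 = 1 by rewrite /ep; case: ifP => _; rewrite ?sqrrN expr1n.
have p0 : 0 <= ep * (al * be).
  rewrite /ep; case: ifP => h; first by rewrite mul1r.
  by rewrite mulN1r oppr_ge0; move/negbT: h; rewrite -ltNge => /ltW.
have hc := CS_unit (u1 + ep *: u2) hv.
rewrite dotvDl dotvZl -/al -/be in hc.
rewrite !dotvDl !dotvDr !dotvZl !dotvZr hu1 hu2 (dotvC u2 u1) -/ga in hc.
have hs0 : 0 < sgm <= 1/4.
  have d1 : 1 <= (n.+1%:R : R) by rewrite ler1n.
  have m1 : 1 <= (m%:R : R) ^+ 2 by rewrite expr_ge1 // ler1n.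
  rewrite /sgm; set D := 32 * _ * _.
  have D1 : 32 <= D by rewrite /D; nra.
  apply/andP; split; first by rewrite divr_gt0 //; lra.
  by rewrite ler_pdivrMr; lra.
apply: (kill_real R al be ga ep sgm hs0 e2 p0 h1 h2 _ hg).
move: hc.
have -> : 1 + ep * ga + (ep * ga + ep * (ep * 1)) = 1 + ep ^+ 2 + 2 * ep * ga by ring.
rewrite e2 => h; apply: (le_trans h); lra.
Qed.

End Lower.
Lemma lower_game (R : realType) (n m : nat) (S : reconstructor R n.+1) (T : nat) (del : R) :
  (0 < m)%N -> 0 < del -> (T < m ^ n)%N ->
  ((del * (1 + sgm R n m))%:E <= worst_error S T del)%E.
Proof.
move=> m0 d0 hT.
pose q t := proj1_sig (rq S (take t (nseq T (0:R)))).
have hq t : dotv (q t) (q t) = 1 by rewrite /q; case: (rq S _).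
pose kill (f : JP n m) (t : nat) := 1 < dotv (nrm (pv R n m f)) (q t) ^+ 2 * (1 + sgm R n m) ^+ 2.
have [f hf] : exists f : JP n m, forall t : 'I_T, ~~ kill f t.
  case: (pickP (fun f : JP n m => [forall t : 'I_T, ~~ kill f t])) => [f /forallP hf | hnone].
    by exists f.
  exfalso.
  pose f0 : JP n m := [ffun => Ordinal m0].
  pose h (t : 'I_T) : JP n m := odflt f0 [pick f | kill f t].
  have sub : [set: JP n m] \subset [set h t | t in [set: 'I_T]].
    apply/fintype.subsetP => f _.
    have := hnone f; move/negbT/forallPn => [t]; rewrite negbK => kt.
    apply/finset.imsetP; exists t; first by rewrite inE.
    rewrite /h; case: pickP => [f' kt' | hn] /=.
      exact: (kill_uniq R n m f f' (q t) m0 (hq t) kt kt').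
    by have := hn f; rewrite kt.
  have := subset_leq_card sub.
  rewrite cardsT card_ffun !card_ord => hle.
  have := leq_trans hle (leq_imset_card _ _).
  by rewrite cardsT card_ord leqNgt hT.
set u := nrm (pv R n m f).
have hu : dotv u u = 1 by apply: dotv_nrm; apply: pv_pos.
have s0 : 0 <= sgm R n m.
  by rewrite /sgm divr_ge0 // mulr_ge0 // ?mulr_ge0 // ?exprn_ge0 // ler0n.
set c := del * (1 + sgm R n m).
have c0 : 0 < c by rewrite /c mulr_gt0 //; lra.
have cons : forall s : R, s = 1 \/ s = -1 -> consistent S T del ((s * c) *: u) (nseq T 0).
  move=> s hs; split; first by rewrite size_nseq.
  move=> t ht; rewrite nth_nseq ht sub0r normrN dotvZl normrM.
  have := hf (Ordinal ht); rewrite /kill -/u -leNgt /= => hk.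
  have -> : `|s * c| = c by case: hs => ->; rewrite ?mul1r ?mulN1r ?normrN gtr0_norm.
  rewrite /c -mulrA; apply: ler_piMr; first exact: ltW.
  move: hk; rewrite /q.
  set a := dotv u _ => hk.
  have y0 : 0 <= (1 + sgm R n m) * `|a| by rewrite mulr_ge0 //; lra.
  have : ((1 + sgm R n m) * `|a|) ^+ 2 <= 1.
    by rewrite exprMn real_normK ?num_real // mulrC.
  move: y0; set y := _ * `|a|; nra.
pose v := sph (pv_pos R n m f m0).
set G := rout S (nseq T 0) v.
have key : forall s, s = 1 \/ s = -1 ->
    ((`|G - dotv ((s * c) *: u) (proj1_sig v)|)%:E <= worst_error S T del)%E.
  move=> s hs; apply: ereal_sup_ubound => /=.
  by exists ((s * c) *: u), (nseq T 0), v; split => //; exact: cons.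
case: (lerP G 0) => hG.
- apply: le_trans (key 1 (or_introl erefl)).
  rewrite lee_fin /= dotvZl hu mulr1 mul1r ler_normr; apply/orP; right; lra.
- apply: le_trans (key (-1) (or_intror erefl)).
  rewrite lee_fin /= dotvZl hu mulr1 mulN1r ler_normr; apply/orP; left; lra.
Qed.
Section Upper.
Variables (R : realType) (n m : nat) (del : R).
Definition j0 : JC n m := (ord0, [ffun => ord0]).
Definition qj (t : nat) : JC n m := nth j0 (enum {: JC n m}) t.
Definition qv (t : nat) : 'rV[R]_n.+1 := nrm (wv R n m (qj t)).
Definition Cs (s : seq R) (x : 'rV[R]_n.+1) : Prop :=
  forall t, (t < size s)%N -> `|nth 0 s t - dotv x (qv t)| <= del.
Definition Sp (s : seq R) (v : 'rV[R]_n.+1) : set R := fun y => exists x, Cs s x /\ y = dotv x v.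
Definition Sn (s : seq R) (v : 'rV[R]_n.+1) : set R := fun y => exists x, Cs s x /\ y = - dotv x v.
Definition mid (s : seq R) (v : sphere R n.+1) : R :=
  (sup (Sp s (proj1_sig v)) - sup (Sn s (proj1_sig v))) / 2.
Definition ustrat (m0 : (0 < m)%N) : reconstructor R n.+1 :=
  Reconstructor (fun s => sph (wv_pos R n m (qj (size s)) m0)) mid.

Lemma diff_bound (s : seq R) (x1 x2 v : 'rV[R]_n.+1) :
  (1 <= m)%N -> 2 * n.+1%:R <= m%:R ^+ 2 :> R -> (#|{: JC n m}| <= size s)%N -> 0 < del ->
  dotv v v = 1 -> Cs s x1 -> Cs s x2 ->
  dotv x1 v - dotv x2 v <= 2 * del * (1 + n.+1%:R / (2 * m%:R ^+ 2)).
Proof.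
move=> m1 hm2 hT d0 hv c1 c2.
set y := (2 * del)^-1 *: (x1 - x2).
have hy : dotv y y <= 1 + n.+1%:R / m%:R ^+ 2.
  apply: cover => // j.
  set t := index j (enum {: JC n m}).
  have ht : (t < size s)%N.
    apply: leq_trans hT; rewrite cardE index_mem mem_enum //.
  have hqj : qj t = j by rewrite /qj nth_index // mem_enum.
  have W0 := wv_pos R n m j m1.
  have h1 := c1 t ht; have h2 := c2 t ht.
  rewrite /qv hqj in h1 h2.
  have : dotv y (nrm (wv R n m j)) ^+ 2 <= 1.
    rewrite /y dotvZl dotvBl.
    set a1 := dotv x1 _ in h1 *; set a2 := dotv x2 _ in h2 *.
    move: h1 h2; rewrite !ler_norml => /andP[h1 h1'] /andP[h2 h2'].
    have hh : `|(2 * del)^-1 * (a1 - a2)| <= 1.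
      rewrite normrM gtr0_norm ?invr_gt0 ?mulr_gt0 // ler_pdivrMl ?mulr_gt0 // mulr1.
      rewrite ler_norml; apply/andP; split; lra.
    move: hh; set w := (2 * del)^-1 * (a1 - a2) => hh.
    rewrite -(real_normK (num_real w)).
    have : 0 <= `|w| by [].
    nra.
  by rewrite dotv_nrm_sq // ler_pdivrMr // mul1r.
have hyv : dotv y v <= 1 + n.+1%:R / (2 * m%:R ^+ 2).
  have := dotv_amgm y v 1; rewrite hv mulr1 expr1n mulr1.
  have -> : n.+1%:R / (2 * m%:R ^+ 2) = (n.+1%:R / m%:R ^+ 2) / 2 :> R.
    by rewrite invfM mulrA mulrAC.
  lra.
have e : dotv x1 v - dotv x2 v = 2 * del * dotv y v.
  by rewrite /y dotvZl dotvBl mulrA mulfV ?mul1r // gt_eqF // mulr_gt0.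
rewrite e; apply: ler_wpM2l => //; apply: mulr_ge0 => //; lra.
Qed.
End Upper.
Lemma rq_ustrat (R : realType) (n m : nat) (del : R) (m0 : (0 < m)%N) (s : seq R) :
  proj1_sig (rq (ustrat R n m del m0) s) = qv R n m (size s).
Proof. by []. Qed.

Lemma upper_game (R : realType) (n m : nat) (del : R) (T : nat) (m0 : (0 < m)%N) :
  2 * n.+1%:R <= m%:R ^+ 2 :> R -> (#|{: JC n m}| <= T)%N -> 0 < del ->
  (worst_error (ustrat R n m del m0) T del <=
    (del * (1 + n.+1%:R / (2 * m%:R ^+ 2)))%:E)%E.
Proof.
move=> hm2 hT d0; apply: ge_ereal_sup => e [x [rs [v [[hsz hc] ->]]]].
rewrite lee_fin.
have hv : dotv (proj1_sig v) (proj1_sig v) = 1 := proj2_sig v.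
pose vv := proj1_sig v.
change (`|mid R n m del rs v - dotv x vv| <= del * (1 + n.+1%:R / (2 * m%:R ^+ 2)))%R.
have Cx : Cs R n m del rs x.
  move=> t ht; have ht' : (t < T)%N by rewrite -hsz.
  have h := hc t ht'; rewrite rq_ustrat size_takel in h; first exact: h.
  by rewrite hsz; apply: ltnW.
have hT' : (#|{: JC n m}| <= size rs)%N by rewrite hsz.
pose D := 2 * del * (1 + n.+1%:R / (2 * m%:R ^+ 2)).
have hd : forall x1 x2, Cs R n m del rs x1 -> Cs R n m del rs x2 ->
    dotv x1 vv - dotv x2 vv <= D.
  move=> x1 x2 c1 c2; exact: (diff_bound R n m del rs x1 x2 vv m0 hm2 hT' d0 hv c1 c2).
pose a := dotv x vv.
pose s1 := sup (Sp R n m del rs vv). pose s2 := sup (Sn R n m del rs vv).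
change (`|(s1 - s2) / 2 - a| <= del * (1 + n.+1%:R / (2 * m%:R ^+ 2))).
have eD : D = 2 * (del * (1 + n.+1%:R / (2 * m%:R ^+ 2))) by rewrite /D mulrA.
have ne1 : (Sp R n m del rs vv !=set0)%classic by exists a, x.
have ne2 : (Sn R n m del rs vv !=set0)%classic by exists (- a), x.
have ub1 : ubound (Sp R n m del rs vv) (a + D).
  move=> y [x1 [c1 ->]]; have := hd x1 x c1 Cx; rewrite -/a; lra.
have ub2 : ubound (Sn R n m del rs vv) (- a + D).
  move=> y [x1 [c1 ->]]; have := hd x x1 Cx c1; rewrite -/a; lra.
have h1 : a <= s1 by apply: (ub_le_sup (ex_intro _ _ ub1)); exists x.
have h2 : - a <= s2 by apply: (ub_le_sup (ex_intro _ _ ub2)); exists x.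
have h3 : s2 <= D - s1.
  apply: ge_sup => // y [x2 [c2 ->]].
  have : s1 <= dotv x2 vv + D.
    apply: ge_sup => // z [x1 [c1 ->]]; have := hd x1 x2 c1 c2; lra.
  lra.
rewrite ler_norml; apply/andP; split; lra.
Qed.
Lemma powR_pow_e (R : realType) (n : nat) (x : R) : (0 < n)%N -> 0 <= x ->
  powR (x ^+ n) (2 / n%:R) = x ^+ 2.
Proof.
move=> n0 x0.
have nR : (n%:R : R) != 0 by rewrite pnatr_eq0 -lt0n.
rewrite -powR_mulrn // -powRrM.
have -> : n%:R * (2 / n%:R) = (2%:R : R) by field.
by rewrite powR_mulrn.
Qed.

Lemma lower_rate (R : realType) (n T : nat) : (1 <= n)%N -> (1 <= T)%N ->
  exists m : nat, [/\ (0 < m)%N, (T < m ^ n)%N &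
    1 / (32 * n.+1%:R * powR (2 ^ n)%:R (2 / n%:R)) * powR T%:R (- (2 / n%:R))
      <= sgm R n m].
Proof.
move=> n1 T1.
have exP : exists m, (T < m ^ n)%N.
  exists T.+1; apply: (leq_trans (leqnn T.+1)).
  by rewrite -{1}(expn1 T.+1) leq_pexp2l.
case: (ex_minnP exP) => m hTm hmin.
have m2 : (2 <= m)%N.
  rewrite ltnNge; apply/negP => hm.
  have : (m ^ n <= 1)%N.
    by case: m hm {hTm hmin} => [|[|]] //= _; rewrite ?exp0n ?exp1n.
  move=> h; move: (leq_trans hTm h) T1; lia.
have hm1 : ((m.-1) ^ n <= T)%N.
  rewrite leqNgt; apply/negP => h; have := hmin _ h.
  by case: m m2 {hTm hmin h} => // m' _; rewrite ltnn.
have hmn : (m ^ n <= 2 ^ n * T)%N.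
  apply: (leq_trans _ (leq_mul (leqnn _) hm1)).
  rewrite -expnMn leq_exp2r //; case: m m2 {hTm hmin hm1} => // m' h; lia.
exists m; split => //; first lia.
set e := 2 / n%:R.
have e0 : 0 <= e by rewrite /e divr_ge0 // ler0n.
have PT0 : 0 < powR T%:R e by rewrite powR_gt0 // ltr0n.
have P20 : 0 < powR (2 ^ n)%:R e by rewrite powR_gt0 // ltr0n expn_gt0.
have hmm : (m%:R : R) ^+ 2 <= powR (2 ^ n)%:R e * powR T%:R e.
  rewrite -powRM ?ler0n // -natrM -(powR_pow_e R n m%:R) ?ler0n //.
  apply: ge0_ler_powR => //; rewrite ?nnegrE ?exprn_ge0 ?ler0n //.
  by rewrite -natrX ler_nat.
have m0 : 0 < (m%:R : R) ^+ 2 by rewrite exprn_gt0 // ltr0n; lia.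
have d0 : 0 < (n.+1%:R : R) by rewrite ltr0n.
rewrite powRN /sgm.
set P2 := powR _ e in P20 hmm *. set PT := powR _ e in PT0 hmm *.
rewrite -subr_ge0.
have -> : 1 / (32 * n.+1%:R * m%:R ^+ 2) - 1 / (32 * n.+1%:R * P2) * PT^-1 =
   (P2 * PT - m%:R ^+ 2) / (32 * n.+1%:R * m%:R ^+ 2 * P2 * PT) :> R.
  field; rewrite (gt_eqF PT0) (gt_eqF P20) pnatr_eq0 addrC natr1 pnatr_eq0 /=.
  by rewrite -lt0n; lia.
apply: divr_ge0; first by rewrite subr_ge0.
by rewrite !mulr_ge0 ?ler0n // ltW.
Qed.
Lemma upper_rate (R : realType) (n T : nat) : (1 <= n)%N ->
  (n.+1 * (6 * n.+1) ^ n <= T)%N ->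
  exists m : nat, [/\ (0 < m)%N, 2 * n.+1%:R <= m%:R ^+ 2 :> R,
    (#|{: JC n m}| <= T)%N &
    n.+1%:R / (2 * m%:R ^+ 2) <=
      n.+1%:R / 2 * powR (n.+1 * 6 ^ n)%:R (2 / n%:R) * powR T%:R (- (2 / n%:R)) :> R].
Proof.
move=> n1 hT.
pose P := fun m => (n.+1 * (3 * m) ^ n <= T)%N.
have hP2 : P (2 * n.+1)%N by rewrite /P mulnA.
have exP : exists m, P m by exists (2 * n.+1)%N.
have ubP : forall i, P i -> (i <= T)%N.
  move=> [|i] // hi; apply: leq_trans hi.
  apply: (@leq_trans (3 * i.+1)); first lia.
  apply: (@leq_trans ((3 * i.+1) ^ n)); last exact: leq_pmull.
  by rewrite -{1}(expn1 (3 * i.+1)) leq_pexp2l //; lia.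
case: (ex_maxnP exP ubP) => m hPm hmax.
have m2 : (2 * n.+1 <= m)%N by apply: hmax.
have hnot : (T < n.+1 * (3 * m.+1) ^ n)%N.
  rewrite ltnNge; apply/negP => h; have := hmax _ h; lia.
exists m; split.
- lia.
- have : ((2 * n.+1)%:R <= (m * m)%:R :> R) by rewrite ler_nat; nia.
  by rewrite natrM natrM -expr2.
- rewrite card_prod card_ord card_ffun !card_ord.
  apply: leq_trans hPm; rewrite leq_mul // leq_exp2r //; lia.
set e := 2 / n%:R.
have e0 : 0 <= e by rewrite /e divr_ge0 // ler0n.
have PT0 : 0 < powR T%:R e by rewrite powR_gt0 // ltr0n; lia.
have Q0 : 0 < powR (n.+1 * 6 ^ n)%:R e by rewrite powR_gt0 // ltr0n muln_gt0 expn_gt0.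
have m0 : 0 < (m%:R : R) ^+ 2 by rewrite exprn_gt0 // ltr0n; lia.
have hmm : powR T%:R e <= powR (n.+1 * 6 ^ n)%:R e * m%:R ^+ 2.
  rewrite -(powR_pow_e R n m%:R) ?ler0n // ?(leq_trans _ n1) // -powRM ?ler0n ?exprn_ge0 //.
  apply: ge0_ler_powR => //; rewrite ?nnegrE ?ler0n ?mulr_ge0 ?exprn_ge0 ?ler0n //.
  rewrite -natrX -natrM ler_nat; apply: ltnW; apply: (leq_trans hnot).
  rewrite -mulnA leq_mul // -expnMn leq_exp2r //; lia.
have d0 : 0 < (n.+1%:R : R) by rewrite ltr0n.
rewrite powRN.
set Q := powR _ e in Q0 hmm *. set PT := powR _ e in PT0 hmm *.
rewrite -subr_ge0.
have -> : n.+1%:R / 2 * Q * PT^-1 - n.+1%:R / (2 * m%:R ^+ 2) =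
   n.+1%:R * (Q * m%:R ^+ 2 - PT) / (2 * m%:R ^+ 2 * PT) :> R.
  field; rewrite (gt_eqF PT0) pnatr_eq0 /=; lia.
apply: divr_ge0; first by rewrite mulr_ge0 ?ler0n // subr_ge0.
by rewrite !mulr_ge0 // ltW.
Qed.
Theorem mainTheorem19 (R : realType) (d : nat) :
  (2 <= d)%N ->
  exists (a A : R), 0 < a /\ 0 < A /\
  exists T' : nat, (1 <= T')%N /\
  forall (delta : R) (T : nat), 0 < delta -> (T' <= T)%N ->
    ((delta * (1 + a * powR (T%:R) (- (2 / (d - 1)%:R))))%:E
       <= OPT_improper d T delta)%E /\
    (OPT_improper d T delta
       <= (delta * (1 + A * powR (T%:R) (- (2 / (d - 1)%:R))))%:E)%E.
Proof.
case: d => [|n] // n1.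
have -> : (n.+1 - 1 = n)%N by rewrite subn1.
exists (1 / (32 * n.+1%:R * powR (2 ^ n)%:R (2 / n%:R))),
       (n.+1%:R / 2 * powR (n.+1 * 6 ^ n)%:R (2 / n%:R)).
split; [|split].
- rewrite divr_gt0 // !mulr_gt0 ?ltr0n ?powR_gt0 ?ltr0n ?expn_gt0 //.
- rewrite !mulr_gt0 ?invr_gt0 ?ltr0n ?powR_gt0 ?ltr0n ?muln_gt0 ?expn_gt0 //.
exists (n.+1 * (6 * n.+1) ^ n)%N; split; first by rewrite muln_gt0 expn_gt0.
move=> del T d0 hT.
have T1 : (1 <= T)%N by apply: leq_trans hT; rewrite muln_gt0 expn_gt0.
split.
- have [m [m0 hTm hs]] := lower_rate R n T n1 T1.
  apply: le_ereal_inf_tmp => _ [S _ <-].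
  have hl := lower_game R n m S T del m0 d0 hTm.
  apply: le_trans; last exact: hl.
  by rewrite lee_fin ler_pM2l // lerD2l.
- have [m [m0 hm2 hcard hr]] := upper_rate R n T n1 hT.
  have h := upper_game R n m del T m0 hm2 hcard d0.
  apply: le_trans; first by apply: ereal_inf_lbound; exists (ustrat R n m del m0).
  apply: le_trans; first exact: h.
  by rewrite lee_fin ler_pM2l // lerD2l.
Qed.
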